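(* Consider the optimisation problem of choosing a set of bins $\{\Delta_b\}_{b=1}^{B}$ (disjoint intervals whose union is $[0,1]$, with $B$ arbitrary) that minimises $\sum_{b=1}^{B} \frac{N_b}{N}\,\mathrm{D}(\mathcal{D}_b^y,\widehat{P}_b)$ subject to $\widehat{P}_1 \le \dots \le \widehat{P}_B$, where $\mathrm{D}(\mathcal{D}_b^y,\widehat{P}_b) = \frac{1}{N_b}\sum_{y_i\in\mathcal{D}_b^y}(y_i-\widehat{P}_b)^2$ is the within-bin variance. The minimum of this problem is attained at the bins computed as follows: sort the labels $\{y_i\}_{i=1}^N$ in ascending order of the model predictions $\{P_\theta(x_i)\}_{i=1}^N$; apply the pool-adjacent-violators algorithm (PAVA), i.e. monotonic regression under the squared error $\sum_{i=1}^N(\widehat{y}_i-y_i)^2$, to obtain a monotonically increasing fitted sequence $\{\widehat{y}_i\}_{i=1}^N$; and place a bin boundary at $(P_\theta(x_{i-1})+P_\theta(x_i))/2$ for every $i$ with $\widehat{y}_{i-1}\ne\widehat{y}_i$ (the first bin starting at $0$ and the last bin ending at $1$).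
   Context: Binary classification with data $\mathcal{D}=\{(x_i,y_i)\}_{i=1}^N$, $y_i\in\{0,1\}$, and a probabilistic classifier $P_\theta:\mathcal{X}\to[0,1]$. For a set of bins $\{\Delta_b\}_{b=1}^B$, the data subsets are $\mathcal{D}_b=\{(x_i,y_i)\in\mathcal{D}\mid P_\theta(x_i)\in\Delta_b\}$, with label set $\mathcal{D}_b^y$, size $N_b$, and empirical probability $\widehat{P}_b=\frac{1}{N_b}\sum_{y_i\in\mathcal{D}_b^y}y_i$. It is assumed that the solution of the optimisation problem is not the trivial single bin $\{[0,1]\}$. *)

(* Defs.v *)
From HB Require Import structures.
From mathcomp Require Import all_boot all_order all_algebra.
Set Implicit Arguments. Unset Strict Implicit. Unset Printing Implicit Defensive.
Import Order.TTheory GRing.Theory Num.Theory.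
Local Open Scope ring_scope.

Section Binning.
Variable R : realFieldType.

Definition itv01 : interval R := `[0, 1].

Definition yv (N : nat) (y : 'I_N -> bool) (i : 'I_N) : R := (nat_of_bool (y i))%:R.

Definition Nb (N : nat) (p : 'I_N -> R) (I : interval R) : nat :=
  #|[pred i : 'I_N | p i \in I]|.

(* empirical probability P^_b (value 0 for an empty bin, by x/0 = 0) *)
Definition Phat (N : nat) (p : 'I_N -> R) (y : 'I_N -> bool) (I : interval R) : R :=
  (\sum_(i | p i \in I) yv y i) / (Nb p I)%:R.

Definition Dvar (N : nat) (p : 'I_N -> R) (y : 'I_N -> bool) (I : interval R) : R :=
  (\sum_(i | p i \in I) (yv y i - Phat p y I) ^+ 2) / (Nb p I)%:R.

Definition objective (N : nat) (p : 'I_N -> R) (y : 'I_N -> bool)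
    (bins : seq (interval R)) : R :=
  \sum_(I <- bins) ((Nb p I)%:R / N%:R * Dvar p y I).

Definition is_binning (bins : seq (interval R)) : Prop :=
  [/\ forall x : R, x \in itv01 <->
        exists2 b, (b < size bins)%N & x \in nth itv01 bins b,
      forall b b' (x : R), (b < size bins)%N -> (b' < size bins)%N ->
        x \in nth itv01 bins b -> x \in nth itv01 bins b' -> b = b'
    & forall b b' (x x' : R), (b < b')%N -> (b' < size bins)%N ->
        x \in nth itv01 bins b -> x' \in nth itv01 bins b' -> x < x'].

(* monotonicity constraint P^_1 <= ... <= P^_B (imposed on bins that contain
   data, since P^_b is only defined when N_b > 0) *)
Definition monotone_bins (N : nat) (p : 'I_N -> R) (y : 'I_N -> bool)
    (bins : seq (interval R)) : Prop :=
  forall b b', (b < b')%N -> (b' < size bins)%N ->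
    (0 < Nb p (nth itv01 bins b))%N -> (0 < Nb p (nth itv01 bins b'))%N ->
    Phat p y (nth itv01 bins b) <= Phat p y (nth itv01 bins b').

Definition feasible (N : nat) (p : 'I_N -> R) (y : 'I_N -> bool)
    (bins : seq (interval R)) : Prop :=
  is_binning bins /\ monotone_bins p y bins.

Definition is_optimal (N : nat) (p : 'I_N -> R) (y : 'I_N -> bool)
    (bins : seq (interval R)) : Prop :=
  feasible p y bins /\
  forall bins', feasible p y bins' -> objective p y bins <= objective p y bins'.

(* A block is (sum of its labels, number of its elements); the stack holds the
   blocks built so far, most recent first. *)
Definition bmean (b : R * nat) : R := b.1 / (b.2)%:R.

Fixpoint pava_push (b : R * nat) (stk : seq (R * nat)) : seq (R * nat) :=
  match stk with
  | [::] => [:: b]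
  | c :: stk' =>
      if bmean b < bmean c then pava_push (b.1 + c.1, (b.2 + c.2)%N) stk'
      else b :: stk
  end.

Definition pava_blocks (ys : seq R) : seq (R * nat) :=
  rev (foldl (fun stk v => pava_push (v, 1%N) stk) [::] ys).

Definition pava (ys : seq R) : seq R :=
  flatten [seq nseq b.2 (bmean b) | b <- pava_blocks ys].

Definition sorted_idx (N : nat) (p : 'I_N -> R) : seq 'I_N :=
  sort (fun i j => p i <= p j) (enum 'I_N).

Fixpoint mk_bins (a : R) (cs : seq R) : seq (interval R) :=
  match cs with
  | [::] => [:: (`[a, 1] : interval R) ]
  | c :: cs' => (`[a, c[ : interval R) :: mk_bins c cs'
  end.

Definition pava_bins (N : nat) (p : 'I_N -> R) (y : 'I_N -> bool) : seq (interval R) :=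
  let s := sorted_idx p in
  let ps := [seq p i | i <- s] in
  let yhat := pava [seq yv y i | i <- s] in
  let cs := [seq (ps`_k.-1 + ps`_k) / 2 | k <- iota 1 N.-1 & yhat`_k.-1 != yhat`_k] in
  mk_bins 0 cs.

End Binning.

(* Main.v *)
Require Import Defs.
From HB Require Import structures.
From mathcomp Require Import all_boot all_order all_algebra.
From mathcomp Require Import ring lra zify.
Set Implicit Arguments. Unset Strict Implicit. Unset Printing Implicit Defensive.
Import Order.TTheory GRing.Theory Num.Theory.
Local Open Scope ring_scope.

Section Pava.
Variable R : realFieldType.

Definition absb (L : seq R) : R * nat := (\sum_(x <- L) x, size L).
Definition mean (L : seq R) : R := bmean (absb L).

Lemma sum_nth (L : seq R) : \sum_(x <- L) x = \sum_(k < size L) L`_k.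
Proof. by rewrite (big_nth 0) big_mkord. Qed.

Lemma sum_subc n (F : nat -> R) c :
  \sum_(k < n) (F k - c) = \sum_(k < n) F k - n%:R * c.
Proof. by rewrite sumrB sumr_const card_ord mulr_natl. Qed.

Definition pp (L : seq R) : Prop :=
  (0 < size L)%N /\ forall j, (j <= size L)%N -> 0 <= \sum_(k < j) (L`_k - mean L).

Lemma mean_mul L : (0 < size L)%N -> (size L)%:R * mean L = \sum_(k < size L) L`_k.
Proof.
move=> h; rewrite /mean /bmean /absb /= sum_nth mulrC divfK //.
by rewrite pnatr_eq0 -lt0n.
Qed.

Lemma tot0 L : (0 < size L)%N -> \sum_(k < size L) (L`_k - mean L) = 0.
Proof. by move=> h; rewrite sum_subc mean_mul // subrr. Qed.

Lemma nthcl (s t : seq R) k : (k < size s)%N -> (s ++ t)`_k = s`_k.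
Proof. by move=> h; rewrite nth_cat h. Qed.
Lemma nthcr (s t : seq R) k : (s ++ t)`_(size s + k) = t`_k.
Proof. by rewrite nth_cat ltnNge leq_addr /= addKn. Qed.
Lemma nthnl n (m : R) t k : (k < n)%N -> (nseq n m ++ t)`_k = m.
Proof. by move=> h; rewrite nth_cat size_nseq h nth_nseq h. Qed.
Lemma nthnr n (m : R) t k : (nseq n m ++ t)`_(n + k) = t`_k.
Proof. by rewrite nth_cat size_nseq ltnNge leq_addr /= addKn. Qed.

Lemma pp_cat c b : pp c -> pp b -> mean b < mean c -> pp (c ++ b).
Proof.
move=> [hc pc] [hb pb] hlt.
have Ec := mean_mul hc; have Eb := mean_mul hb.
have hcat: (0 < size (c ++ b))%N by rewrite size_cat addn_gt0 hc.
have Em := mean_mul hcat.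
have Ecat : \sum_(k < size (c++b)) (c++b)`_k = \sum_(k<size c) c`_k + \sum_(k<size b) b`_k.
  by rewrite -!sum_nth big_cat.
rewrite Ecat -Ec -Eb size_cat natrD in Em.
set m := mean (c ++ b) in Em *.
set mc := mean c in Ec Em pc hlt *; set mb := mean b in Eb Em pb hlt *.
have xc0 : 0 < (size c)%:R :> R by rewrite ltr0n.
have xb0 : 0 < (size b)%:R :> R by rewrite ltr0n.
have hmc : m <= mc by nra.
have hmb : mb <= m by nra.
split => // j; rewrite size_cat => hj.
case: (leqP j (size c)) => hjc.
- have -> : \sum_(k < j) ((c ++ b)`_k - m) =
            \sum_(k < j) (c`_k - mc) + j%:R * (mc - m).
    rewrite !sum_subc.
    under eq_bigr => k _ do (rewrite nthcl; last exact: leq_trans (ltn_ord k) hjc).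
    ring.
  apply: addr_ge0; first exact: pc.
  by apply: mulr_ge0; rewrite ?ler0n // subr_ge0.
- have [i ?] : exists i, j = (size c + i)%N.
    by exists (j - size c)%N; rewrite subnKC // ltnW.
  subst j.
  have hi : (i <= size b)%N by lia.
  rewrite big_split_ord /=.
  under eq_bigr => k _ do rewrite nthcl //.
  under [X in _ + X]eq_bigr => k _ do rewrite nthcr.
  have -> : \sum_(k < i) (b`_k - m) = \sum_(k < i) (b`_k - mb) + i%:R * (mb - m).
    rewrite !sum_subc; ring.
  rewrite sum_subc -Ec.
  have := pb i hi.
  have : i%:R <= (size b)%:R :> R by rewrite ler_nat.
  rewrite -/m => hp1 hp2.
  have : 0 <= ((size b)%:R - i%:R) * (m - mb) by apply: mulr_ge0; rewrite subr_ge0.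
  nra.
Qed.

Fixpoint cpush (b : seq R) (stk : seq (seq R)) : seq (seq R) :=
  match stk with
  | [::] => [:: b]
  | c :: stk' => if mean b < mean c then cpush (c ++ b) stk' else b :: stk
  end.

Lemma cpush_abs b stk : map absb (cpush b stk) = pava_push (absb b) (map absb stk).
Proof.
elim: stk b => [|c stk IH] b //=.
rewrite /mean; case: ifP => // _; rewrite IH; congr pava_push.
by rewrite /absb big_cat size_cat /= addrC addnC.
Qed.

Definition inv (stk : seq (seq R)) : Prop :=
  (forall L, L \in stk -> pp L) /\ sorted (fun a b => mean b <= mean a) stk.

Lemma cpush_inv b stk : inv stk -> pp b ->
  inv (cpush b stk) /\ flatten (rev (cpush b stk)) = flatten (rev stk) ++ b.
Proof.
elim: stk b => [|c stk IH] b.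
  move=> _ hb; split; last by rewrite /= cats0.
  by split => // L; rewrite inE => /eqP ->.
move=> [hall hs] hb /=.
have hc : pp c by apply: hall; rewrite inE eqxx.
case: ifP => hlt.
  have [h1 h2] := IH (c ++ b) (conj (fun L hL => hall L (mem_behead hL)) (path_sorted hs))
                    (pp_cat hc hb hlt).
  split => //; by rewrite h2 rev_cons flatten_rcons catA.
split; last by rewrite [in LHS]rev_cons flatten_rcons.
split.
  move=> L; rewrite inE => /orP [/eqP -> //|]; exact: hall.
by rewrite /= leNgt hlt; exact: hs.
Qed.

Definition cstep (stk : seq (seq R)) (v : R) := cpush [:: v] stk.
Definition astep (stk : seq (R * nat)) (v : R) := pava_push (v, 1%N) stk.

Lemma pp1 v : pp [:: v].
Proof.
have hm : mean [:: v] = v by rewrite /mean /bmean /absb /= big_seq1 divr1.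
split => // j; case: j => [|[|//]] _; first by rewrite big_ord0.
by rewrite big_ord1 /= hm subrr.
Qed.

Lemma foldl_inv ys st : inv st ->
  inv (foldl cstep st ys) /\ flatten (rev (foldl cstep st ys)) = flatten (rev st) ++ ys.
Proof.
elim: ys st => [|v ys IH] st hst /=; first by rewrite cats0.
have [h1 h2] := cpush_inv hst (pp1 v).
have [h3 h4] := IH _ h1.
by split => //; rewrite h4 /cstep h2 -catA.
Qed.

Lemma foldl_abs ys st : map absb (foldl cstep st ys) = foldl astep (map absb st) ys.
Proof.
elim: ys st => [|v ys IH] st //=.
rewrite IH /cstep cpush_abs; congr (foldl _ (pava_push _ _) _).
by rewrite /absb big_seq1.
Qed.

Definition blocks (ys : seq R) := rev (foldl cstep [::] ys).
Definition Hf (B : seq (seq R)) := flatten [seq nseq (size L) (mean L) | L <- B].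

Lemma pava_blocksE ys : pava ys = Hf (blocks ys).
Proof.
rewrite /pava /pava_blocks.
have -> : foldl (fun stk v => pava_push (v, 1%N) stk) [::] ys = map absb (foldl cstep [::] ys).
  by rewrite foldl_abs.
by rewrite -map_rev /blocks /Hf -map_comp.
Qed.

Lemma blocks_prop ys :
  [/\ forall L, L \in blocks ys -> pp L,
      sorted (fun a b => mean a <= mean b) (blocks ys) & flatten (blocks ys) = ys].
Proof.
have [[h1 h2] h3] := foldl_inv ys (conj (fun L (hL : L \in [::]) => False_ind _ (notF hL)) erefl).
split.
- by move=> L; rewrite mem_rev; apply: h1.
- by rewrite rev_sorted.
- by rewrite h3.
Qed.

End Pava.

Section Blocks.
Variable R : realFieldType.

Lemma Hf_cons (L : seq R) B : Hf (L :: B) = nseq (size L) (mean L) ++ Hf B.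
Proof. by []. Qed.

Lemma size_Hf (B : seq (seq R)) : size (Hf B) = size (flatten B).
Proof. by elim: B => // L B IH; rewrite Hf_cons /= !size_cat size_nseq IH. Qed.

Lemma Hf_sorted (B : seq (seq R)) :
  sorted (fun a b => mean a <= mean b) B -> sorted <=%R (Hf B).
Proof.
elim: B => // L B IH hs.
rewrite Hf_cons.
have hB := path_sorted hs.
have htr : transitive (fun a b : seq R => mean a <= mean b).
  by move=> u v w h1 h2; exact: le_trans h1 h2.
have hmin := order_path_min htr hs.
have hall : all (fun v => mean L <= v) (Hf B).
  apply/allP => v /flattenP [s /mapP [L' hL' ->]]; rewrite mem_nseq => /andP [_ /eqP ->].
  exact: (allP hmin).
move: (IH hB) hall; elim: (size L) => //= n IHn hsB hall'.
have := IHn hsB hall'.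
case: n {IHn} => [|n] /= hh.
  by rewrite (path_sortedE le_trans) hall' hsB.
by rewrite hh lexx.
Qed.

Lemma Hf_sum (B : seq (seq R)) (Q : pred R) : (forall L, L \in B -> pp L) ->
  \sum_(k < size (flatten B) | Q (Hf B)`_k) (flatten B)`_k =
  \sum_(k < size (flatten B) | Q (Hf B)`_k) (Hf B)`_k.
Proof.
elim: B => [|L B IH] hpp; first by rewrite !big_ord0.
have [hL0 _] := hpp L (mem_head _ _).
rewrite Hf_cons /= size_cat !big_split_ord /=.
congr (_ + _).
  rewrite [LHS](eq_bigl (fun k : 'I_(size L) => Q (mean L))); last by move=> k; rewrite nthnl.
  rewrite [RHS](eq_bigl (fun k : 'I_(size L) => Q (mean L))); last by move=> k; rewrite nthnl.
  under eq_bigr => k _ do rewrite nthcl //.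
  under [RHS]eq_bigr => k _ do rewrite nthnl //.
  case: (boolP (Q (mean L))) => hq; last by rewrite !big_pred0_eq.
  by rewrite -mean_mul // sumr_const card_ord mulr_natl.
under eq_bigl => k do rewrite nthnr.
under eq_bigr => k _ do rewrite nthcr.
under [RHS]eq_bigr => k _ do rewrite nthnr.
under [RHS]eq_bigl => k do rewrite nthnr.
by apply: IH => L' hL'; apply: hpp; rewrite inE hL' orbT.
Qed.

Definition mono (f : nat -> R) lo hi :=
  forall k l, (lo <= k)%N -> (k <= l)%N -> (l < hi)%N -> f k <= f l.

Lemma abel (m : R) f (L : seq R) a o : 0 <= a ->
  (forall j, (j <= size L)%N -> 0 <= a + \sum_(k < j) (L`_k - m)) ->
  a + \sum_(k < size L) (L`_k - m) = 0 -> mono f o (o + size L) ->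
  \sum_(k < size L) (L`_k - m) * f (o + k)%N <= - (a * f o).
Proof.
elim: L a o => [|x L IH] a o ha hpre htot hf /=.
  by move: htot; rewrite big_ord0 addr0 => ->; rewrite mul0r oppr0 big_ord0.
rewrite big_ord_recl /= addn0.
have -> : \sum_(i < size L) ((x :: L)`_(lift ord0 i) - m) * f (o + lift ord0 i)%N
        = \sum_(i < size L) (L`_i - m) * f (o.+1 + i)%N.
  by apply: eq_bigr => i _; rewrite /= /bump /= add1n addSnnS.
set a' := a + (x - m).
have ha' : 0 <= a' by have := hpre 1%N isT; rewrite big_ord1.
have hpre' : forall j, (j <= size L)%N -> 0 <= a' + \sum_(k < j) (L`_k - m).
  move=> j hj; have := hpre j.+1 hj; rewrite big_ord_recl /= addrA.
  by apply: le_trans; rewrite le_refl.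
have htot' : a' + \sum_(k < size L) (L`_k - m) = 0.
  by move: htot; rewrite /= big_ord_recl /= addrA.
have hf' : mono f o.+1 (o.+1 + size L).
  move=> k l h1 h2 h3; apply: hf => /=; lia.
have hIH := IH a' o.+1 ha' hpre' htot' hf'.
have hfo : a' * f o <= a' * f o.+1.
  case: (posnP (size L)) => hs.
    by move: htot'; rewrite hs big_ord0 addr0 => ->; rewrite !mul0r.
  by apply: ler_wpM2l => //; apply: hf => /=; lia.
move: hIH hfo; rewrite /a'; nra.
Qed.

Lemma block_opt (L : seq R) f o : pp L -> mono f o (o + size L) ->
  \sum_(k < size L) (L`_k - mean L)^+2 <= \sum_(k < size L) (L`_k - f (o + k)%N)^+2.
Proof.
move=> [hL hpre] hf.
have hab := @abel (mean L) f L 0 o (lexx 0)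
  (fun j hj => ltac:(rewrite add0r; exact: hpre j hj)) (ltac:(rewrite add0r tot0 //)) hf.
rewrite mul0r oppr0 in hab.
have E : forall k : 'I_(size L), (L`_k - f (o + k)%N)^+2 =
  (L`_k - mean L)^+2 + ((mean L - f (o + k)%N)^+2 + 2 * ((L`_k - mean L) * mean L)
     - 2 * ((L`_k - mean L) * f (o + k)%N)).
  by move=> k; ring.
rewrite (eq_bigr _ (fun k _ => E k)) big_split /= big_split /= big_split /= sumrN.
rewrite -!mulr_sumr -mulr_suml tot0 // mul0r mulr0 addr0.
have : 0 <= \sum_(i < size L) (mean L - f (o + i)%N) ^+ 2.
  by apply: sumr_ge0 => i _; exact: sqr_ge0.
lra.
Qed.

Lemma Hf_opt (B : seq (seq R)) f o : (forall L, L \in B -> pp L) ->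
  mono f o (o + size (flatten B)) ->
  \sum_(k < size (flatten B)) ((flatten B)`_k - (Hf B)`_k)^+2 <=
  \sum_(k < size (flatten B)) ((flatten B)`_k - f (o + k)%N)^+2.
Proof.
elim: B o => [|L B IH] o hpp hf; first by rewrite !big_ord0.
have hL := hpp L (mem_head _ _).
rewrite Hf_cons /= size_cat !big_split_ord /=.
apply: lerD.
  under eq_bigr => k _ do rewrite nthcl // nthnl //.
  under [X in _ <= X]eq_bigr => k _ do rewrite nthcl //.
  apply: block_opt => // k l h1 h2 h3; apply: hf => //.
  by apply: (leq_trans h3); rewrite /= size_cat addnA leq_addr.
under eq_bigr => k _ do rewrite nthcr nthnr.
under [X in _ <= X]eq_bigr => k _ do rewrite nthcr addnA.
apply: IH.
  by move=> L' hL'; apply: hpp; rewrite inE hL' orbT.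
move=> k l h1 h2 h3; apply: hf => //.
  by apply: leq_trans h1; exact: leq_addr.
by move: h3; rewrite /= size_cat addnA.
Qed.

End Blocks.

Section Bins.
Variable R : realFieldType.

Lemma mk_lb (a : R) cs : path <%R a cs ->
  forall I x, I \in mk_bins a cs -> x \in I -> a <= x.
Proof.
elim: cs a => [|c cs IH] a /= hp I x.
  by rewrite inE => /eqP ->; rewrite in_itv /= => /andP [].
move/andP: hp => [hac hp]; rewrite inE => /orP [/eqP ->|hI].
  by rewrite in_itv /= => /andP [].
move=> hx; exact: le_trans (ltW hac) (IH c hp I x hI hx).
Qed.

Lemma mk_ub (a : R) cs : a <= 1 -> all (fun c => c <= 1) cs ->
  forall I x, I \in mk_bins a cs -> x \in I -> x <= 1.
Proof.
elim: cs a => [|c cs IH] a /= ha hall I x.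
  by rewrite inE => /eqP ->; rewrite in_itv /= => /andP [].
move/andP: hall => [hc hall]; rewrite inE => /orP [/eqP ->|hI].
  by rewrite in_itv /= => /andP [_ h]; apply: le_trans (ltW h) hc.
exact: IH hc hall I x hI.
Qed.

Lemma mk_ord (a : R) cs : path <%R a cs -> forall b b' x x', (b < b')%N ->
  (b' < size (mk_bins a cs))%N ->
  x \in nth (itv01 R) (mk_bins a cs) b -> x' \in nth (itv01 R) (mk_bins a cs) b' -> x < x'.
Proof.
elim: cs a => [|c cs IH] a hp b b' x x' hbb' hb'.
  by move: hb' hbb'; rewrite /=; lia.
move: hp => /= /andP [hac hp].
case: b hbb' => [|b]; case: b' hb' => [|b'] //= hb' hbb' hx hx'.
all: rewrite ?ltnS in hb' hbb'.
  move: hx; rewrite in_itv /= => /andP [_ hxc].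
  apply: lt_le_trans hxc _.
  by have := mk_lb hp (mem_nth (itv01 R) hb'); apply.
exact: IH c hp b b' x x' hbb' hb' hx hx'.
Qed.

Lemma mk_same (a : R) cs x x' : path <%R a cs -> all (fun c => c <= 1) cs ->
  a <= x -> x <= x' -> x' <= 1 ->
  has (fun I => (x \in I) && (x' \in I)) (mk_bins a cs) =
  ~~ has (fun c => (x < c) && (c <= x')) cs.
Proof.
elim: cs a => [|c cs IH] a /= hp hall hax hxx' hx'1.
  by rewrite !in_itv /= hax hx'1 (le_trans hax hxx') (le_trans hxx' hx'1).
move/andP: hp => [hac hp]; move/andP: hall => [hc1 hall].
have hmin := order_path_min lt_trans hp.
rewrite !in_itv /=.
case: (ltP x' c) => hx'c.
  rewrite hax (le_trans hax hxx') (le_lt_trans hxx' hx'c) /=.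
  apply/esym/hasPn => c' hc'.
  have hcc' := allP hmin c' hc'.
  by rewrite (leNgt c') (lt_trans hx'c hcc') andbF.
rewrite !andbF /=.
case: (ltP x c) => hxc.
  rewrite /=; apply/negbTE/hasPn => I hI; apply/negP => /andP [hx _].
  by have := mk_lb hp hI hx; rewrite leNgt hxc.
rewrite /=; exact: IH.
Qed.

Lemma mk_binning cs : path <%R 0 cs -> all (fun c => c <= 1) cs ->
  is_binning (mk_bins (0 : R) cs).
Proof.
move=> hp hall.
have hord := mk_ord hp.
split.
- move=> x; split.
  + rewrite /itv01 in_itv /= => /andP [h0 h1].
    have := mk_same hp hall h0 (lexx x) h1.
    have -> : has (fun c => (x < c) && (c <= x)) cs = false.
      apply/hasPn => c _; apply/negP => /andP [h2 h3].
      by have := lt_le_trans h2 h3; rewrite ltxx.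
    move=> /= /(has_nthP (itv01 R)) [b hb /andP [hx _]]; by exists b.
  + move=> [b hb hx]; rewrite /itv01 in_itv /=; apply/andP; split.
      by have := mk_lb hp (mem_nth (itv01 R) hb); apply.
    by have := mk_ub (@ler01 R) hall (mem_nth (itv01 R) hb); apply.
- move=> b b' x hb hb' hx hx'; case: (ltngtP b b') => // h.
  + by have := hord _ _ _ _ h hb' hx hx'; rewrite ltxx.
  + by have := hord _ _ _ _ h hb hx' hx; rewrite ltxx.
- move=> b b' x x' h hb'; exact: hord.
Qed.

End Bins.

Section Main.
Variable R : realFieldType.
Variable N : nat.
Variable p : 'I_N -> R.
Variable y : 'I_N -> bool.
Variable x0 : 'I_N.
Hypothesis hp : forall i, 0 <= p i <= 1.
Hypothesis hinj : injective p.

Local Notation s := (sorted_idx p).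
Local Notation ps := [seq p i | i <- s].
Local Notation ys := [seq yv R y i | i <- s].
Local Notation yh := (pava ys).

Lemma size_s : size s = N.
Proof. by rewrite /sorted_idx size_sort size_enum_ord. Qed.

Lemma uniq_s : uniq s.
Proof. by rewrite /sorted_idx sort_uniq enum_uniq. Qed.

Lemma mem_s i : i \in s.
Proof. by rewrite /sorted_idx mem_sort mem_enum. Qed.

Lemma ps_nth k : (k < N)%N -> ps`_k = p (nth x0 s k).
Proof. by move=> hk; rewrite (nth_map x0) // size_s. Qed.

Lemma ys_nth k : (k < N)%N -> ys`_k = yv R y (nth x0 s k).
Proof. by move=> hk; rewrite (nth_map x0) // size_s. Qed.

Lemma size_ys : size ys = N.
Proof. by rewrite size_map size_s. Qed.

Lemma ps_lt k l : (k < l)%N -> (l < N)%N -> p (nth x0 s k) < p (nth x0 s l).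
Proof.
move=> hkl hl.
have htot : total (fun i j : 'I_N => p i <= p j) by move=> i j; exact: le_total.
have htr : transitive (fun i j : 'I_N => p i <= p j).
  by move=> i j k' h1 h2; exact: le_trans h1 h2.
have hs := sort_sorted htot (enum 'I_N).
have := sorted_ltn_nth htr x0 hs; move=> /(_ k l).
rewrite !inE -/(sorted_idx p) size_s => /(_ (ltn_trans hkl hl) hl hkl) hle.
rewrite lt_neqAle hle andbT; apply/negP => /eqP /hinj /eqP.
rewrite nth_uniq ?size_s ?uniq_s ?(ltn_trans hkl hl) //.
by move=> /eqP h; move: hkl; rewrite h ltnn.
Qed.

Lemma ps_le k l : (k <= l)%N -> (l < N)%N -> p (nth x0 s k) <= p (nth x0 s l).
Proof.
rewrite leq_eqVlt => /orP [/eqP -> //|h] hl; exact/ltW/ps_lt.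
Qed.

Lemma reindex (P : pred 'I_N) (F : 'I_N -> R) :
  \sum_(i | P i) F i = \sum_(k < N | P (nth x0 s k)) F (nth x0 s k).
Proof.
have hperm : perm_eq (index_enum 'I_N) s.
  apply: uniq_perm; [exact: index_enum_uniq | exact: uniq_s |].
  by move=> i; rewrite mem_index_enum mem_s.
by rewrite (perm_big _ hperm) (big_nth x0) big_mkord size_s.
Qed.

Lemma pos_of i : exists2 k, (k < N)%N & i = nth x0 s k.
Proof.
exists (index i s); first by have := index_mem i s; rewrite mem_s size_s.
by rewrite nth_index // mem_s.
Qed.


Lemma hN0 : (0 < N)%N.
Proof. exact: leq_ltn_trans (leq0n _) (ltn_ord x0). Qed.

Lemma yh_HB : yh = Hf (blocks ys).
Proof. exact: pava_blocksE. Qed.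

Lemma size_yh : size yh = N.
Proof. by have [_ _ h] := blocks_prop ys; rewrite yh_HB size_Hf h size_ys. Qed.

Lemma yh_le k l : (k <= l)%N -> (l < N)%N -> yh`_k <= yh`_l.
Proof.
move=> hkl hl.
have [_ hs _] := blocks_prop ys.
have hsort := Hf_sorted hs; rewrite -yh_HB in hsort.
have := sorted_leq_nth le_trans lexx 0 hsort; move=> /(_ k l); rewrite !inE size_yh.
by move=> /(_ (leq_ltn_trans hkl hl) hl hkl).
Qed.

Lemma yh_sum (Q : pred R) :
  \sum_(k < N | Q yh`_k) ys`_k = \sum_(k < N | Q yh`_k) yh`_k.
Proof.
have [hpp _ hB] := blocks_prop ys.
by have := Hf_sum Q hpp; rewrite hB -yh_HB size_ys.
Qed.

Lemma yh_opt (f : nat -> R) : (forall k l, (k <= l)%N -> (l < N)%N -> f k <= f l) ->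
  \sum_(k < N) (ys`_k - yh`_k)^+2 <= \sum_(k < N) (ys`_k - f k)^+2.
Proof.
move=> hf.
have [hpp _ hB] := blocks_prop ys.
have := @Hf_opt R (blocks ys) f 0 hpp.
rewrite hB -yh_HB size_ys.
have -> : \sum_(k < N) (ys`_k - f k)^+2 = \sum_(k < N) (ys`_k - f (0 + k)%N)^+2.
  by apply: eq_bigr => k _; rewrite add0n.
by apply => k l _ h1 h2; apply: hf.
Qed.

Lemma psS k l : (k < l)%N -> (l < N)%N -> ps`_k < ps`_l.
Proof. by move=> h hl; rewrite !ps_nth ?(ltn_trans h hl) //; exact: ps_lt. Qed.

Lemma psW k l : (k <= l)%N -> (l < N)%N -> ps`_k <= ps`_l.
Proof. by move=> h hl; rewrite !ps_nth ?(leq_ltn_trans h hl) //; exact: ps_le. Qed.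

Lemma ps01 k : (k < N)%N -> 0 <= ps`_k <= 1.
Proof. by move=> h; rewrite ps_nth. Qed.

Lemma cKb K : (0 < K)%N -> (K < N)%N ->
  ps`_K.-1 < (ps`_K.-1 + ps`_K) / 2 /\ (ps`_K.-1 + ps`_K) / 2 < ps`_K.
Proof.
move=> h0 h; have [h1 h2] := midf_lt (@psS K.-1 K ltac:(lia) h).
by split.
Qed.

Lemma path_cK Ks : sorted ltn Ks -> all (fun K => (0 < K)%N && (K < N)%N) Ks ->
  path <%R 0 [seq (ps`_K.-1 + ps`_K) / 2 | K <- Ks].
Proof.
case: Ks => [|K Ks] //= hKs /andP [/andP [hK0 hKN] hall].
apply/andP; split.
  have [h1 _] := cKb hK0 hKN; have /andP [h3 _] := @ps01 K.-1 ltac:(lia).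
  exact: le_lt_trans h3 h1.
rewrite (@path_map _ _ (fun K => (ps`_K.-1 + ps`_K) / 2)).
apply: (@sub_in_path _ (fun K => (0 < K)%N && (K < N)%N) ltn) hKs; last first.
  by rewrite /= hK0 hKN.
move=> K1 K2 /andP [h10 h1N] /andP [h20 h2N] h12 /=.
have [_ a1] := cKb h10 h1N; have [a2 _] := cKb h20 h2N.
have a3 := @psW K1 K2.-1 ltac:(lia) ltac:(lia).
exact: lt_trans a1 (le_lt_trans a3 a2).
Qed.


Local Notation cs :=
  [seq (ps`_k.-1 + ps`_k) / 2 | k <- iota 1 N.-1 & yh`_k.-1 != yh`_k].

Lemma pava_binsE : pava_bins p y = mk_bins 0 cs.
Proof. by []. Qed.

Lemma memKs K : (K \in [seq k <- iota 1 N.-1 | yh`_k.-1 != yh`_k]) =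
  [&& yh`_K.-1 != yh`_K, (0 < K)%N & (K < N)%N].
Proof.
rewrite mem_filter mem_iota; have := hN0; case: (yh`_K.-1 != yh`_K) => //= hN.
apply/idP/idP => /andP [h1 h2]; apply/andP; split; lia.
Qed.

Lemma cs_path : path <%R 0 cs.
Proof.
apply: path_cK.
  by apply: sorted_filter; [exact: ltn_trans | exact: iota_ltn_sorted].
by apply/allP => K; rewrite memKs => /and3P [_ h1 h2]; rewrite h1 h2.
Qed.

Lemma cs_le1 : all (fun c => c <= 1) cs.
Proof.
apply/allP => c /mapP [K]; rewrite memKs => /and3P [_ h1 h2] ->.
have [_ a] := cKb h1 h2; have /andP [_ b] := @ps01 K h2.
exact: ltW (lt_le_trans a b).
Qed.

Lemma change_ex (g : nat -> R) k k' : (k <= k')%N -> g k != g k' ->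
  exists K, [/\ (k < K)%N, (K <= k')%N & g K.-1 != g K].
Proof.
elim: k' => [|k' IH] hk hne.
  have hk0 : k = 0%N by lia.
  by move: hne; rewrite hk0 eqxx.
case: (ltngtP k k'.+1) => h.
- case: (boolP (g k' == g k'.+1)) => h2.
    have hne' : g k != g k' by rewrite (eqP h2).
    have [K [a b c]] := IH ltac:(lia) hne'.
    by exists K; split => //; lia.
  by exists k'.+1; split.
- lia.
- by move: hne; rewrite h eqxx.
Qed.

Lemma cut k k' : (k <= k')%N -> (k' < N)%N ->
  has (fun c => (ps`_k < c) && (c <= ps`_k')) cs = (yh`_k != yh`_k').
Proof.
move=> hkk hk'.
apply/hasP/idP.
- move=> [c /mapP [K]]; rewrite memKs => /and3P [hne h1 h2] -> /andP [hkc hck'].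
  have [m1 m2] := cKb h1 h2.
  have hkK : (k < K)%N.
    rewrite ltnNge; apply/negP => hKk.
    have := @psW K k hKk (leq_ltn_trans hkk hk').
    by move=> a; have := lt_trans hkc m2; rewrite ltNge a.
  have hKk' : (K <= k')%N.
    rewrite leqNgt; apply/negP => hk'K.
    have := @psW k' K.-1 ltac:(lia) ltac:(lia).
    by move=> a; have := le_lt_trans a m1; rewrite ltNge hck'.
  have a1 := @yh_le k K.-1 ltac:(lia) ltac:(lia).
  have a2 := @yh_le K.-1 K ltac:(lia) h2.
  have a3 := @yh_le K k' hKk' hk'.
  have a4 : yh`_K.-1 < yh`_K by rewrite lt_neqAle hne a2.
  apply/negP => /eqP heq.
  by have := le_lt_trans a1 (lt_le_trans a4 a3); rewrite heq ltxx.
- move=> hne; have [K [hkK hKk' hK]] := @change_ex (fun j => yh`_j) k k' hkk hne.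
  have h1 : (0 < K)%N by lia.
  have h2 : (K < N)%N by lia.
  exists ((ps`_K.-1 + ps`_K) / 2).
    by apply/mapP; exists K => //; rewrite memKs hK h1 h2.
  have [m1 m2] := cKb h1 h2.
  have a1 := @psW k K.-1 ltac:(lia) ltac:(lia).
  have a2 := @psW K k' hKk' hk'.
  by rewrite (le_lt_trans a1 m1) (ltW (lt_le_trans m2 a2)).
Qed.

Lemma samebin k k' : (k < N)%N -> (k' < N)%N ->
  has (fun I => (ps`_k \in I) && (ps`_k' \in I)) (mk_bins 0 cs) = (yh`_k == yh`_k').
Proof.
wlog hkk : k k' / (k <= k')%N.
  move=> H hk hk'; case: (leqP k k') => h; first exact: H.
  rewrite eq_sym -H //; last exact: ltnW.
  by apply: eq_has => I; rewrite andbC.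
move=> hk hk'.
have /andP [a0 _] := @ps01 k hk; have /andP [_ a1] := @ps01 k' hk'.
have := @mk_same R 0 cs ps`_k ps`_k' cs_path cs_le1 a0 (psW hkk hk') a1.
by move=> ->; rewrite cut // negbK.
Qed.


Lemma swap_sum (bins : seq (interval R)) (F : interval R -> 'I_N -> R) :
  \sum_(I <- bins) \sum_(i : 'I_N) (if p i \in I then F I i else 0) =
  \sum_(i : 'I_N) \sum_(I <- bins) (if p i \in I then F I i else 0).
Proof. by rewrite exchange_big. Qed.

Definition bf (bins : seq (interval R)) (i : 'I_N) := find (fun I => p i \in I) bins.

Lemma bf_prop bins i : is_binning bins ->
  (bf bins i < size bins)%N /\ p i \in nth (itv01 R) bins (bf bins i).
Proof.
move=> [hcov _ _].
have hh : has (fun I => p i \in I) bins.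
  have [b hb hx] := proj1 (hcov (p i)) ltac:(rewrite /itv01 in_itv /=; exact: hp).
  by apply/(has_nthP (itv01 R)); exists b.
split; first by rewrite /bf -has_find.
exact: (nth_find (itv01 R) hh).
Qed.

Lemma objE bins : is_binning bins ->
  objective p y bins =
  (\sum_i (yv R y i - Phat p y (nth (itv01 R) bins (bf bins i)))^+2) / N%:R.
Proof.
move=> hb.
have [_ hdis _] := hb.
rewrite /objective.
have term : forall I, (Nb p I)%:R / N%:R * Dvar p y I =
   (\sum_(i | p i \in I) (yv R y i - Phat p y I)^+2) / N%:R.
  move=> I; rewrite /Dvar.
  case: (Nb p I =P 0%N) => h.
    rewrite h mul0r big_pred0 ?mul0r // => i.
    by have := card0_eq h i; rewrite !inE.
  have hn : (Nb p I)%:R != 0 :> R by rewrite pnatr_eq0; apply/eqP.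
  set S := \sum_(i | p i \in I) _.
  by rewrite mulrC mulrA divfK.
rewrite (eq_bigr _ (fun I _ => term I)) -mulr_suml; congr (_ / _).
rewrite (eq_bigr (fun I => \sum_i (if p i \in I then (yv R y i - Phat p y I)^+2 else 0)));
  last by move=> I _; rewrite big_mkcond.
rewrite swap_sum; apply: eq_bigr => i _.
have [hbi hin] := bf_prop i hb.
have eo : nat_of_ord (Ordinal hbi) = bf bins i by [].
rewrite (big_nth (itv01 R)) big_mkord (bigD1 (Ordinal hbi)) // hin big1 ?Monoid.mulm1 ?eo //.
move=> b /andP [_ hb']; case: ifP => // hpb; exfalso; move/eqP: hb'; apply.
have hbv := hdis _ _ _ (ltn_ord b) hbi hpb hin.
by apply: ord_inj; rewrite hbv.
Qed.

Local Notation PB := (mk_bins (0:R) cs).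

Lemma PB_binning : is_binning PB.
Proof. exact: mk_binning cs_path cs_le1. Qed.

Lemma Kbin b k k' : (b < size PB)%N -> (k < N)%N -> (k' < N)%N ->
  ps`_k \in nth (itv01 R) PB b ->
  (ps`_k' \in nth (itv01 R) PB b) = (yh`_k' == yh`_k).
Proof.
move=> hb hk hk' hin.
have [_ hdis _] := PB_binning.
apply/idP/idP => h.
  rewrite eq_sym -samebin //; apply/hasP; exists (nth (itv01 R) PB b); first exact: mem_nth.
  by rewrite hin h.
move: h; rewrite eq_sym -samebin // => /(has_nthP (itv01 R)) [b' hb' /andP [h1 h2]].
by rewrite (hdis _ _ _ hb hb' hin h1).
Qed.

Lemma Phat_bin b k : (b < size PB)%N -> (k < N)%N ->
  p (nth x0 s k) \in nth (itv01 R) PB b -> Phat p y (nth (itv01 R) PB b) = yh`_k.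
Proof.
move=> hb hk hin.
have hin' : ps`_k \in nth (itv01 R) PB b by rewrite ps_nth.
have hQ : forall k' : 'I_N,
    (p (nth x0 s k') \in nth (itv01 R) PB b) = (yh`_k' == yh`_k).
  by move=> k'; rewrite -(ps_nth (ltn_ord k')) (Kbin hb hk (ltn_ord k') hin').
rewrite /Phat.
have hNb : (Nb p (nth (itv01 R) PB b))%:R =
           \sum_(i | p i \in nth (itv01 R) PB b) (1 : R).
  by rewrite /Nb -sumr_const; apply: eq_bigl => i; rewrite !inE.
rewrite hNb [X in X / _]reindex [X in _ / X]reindex.
under eq_bigl => k' do rewrite hQ.
under [X in _ / X]eq_bigl => k' do rewrite hQ.
under eq_bigr => k' _ do rewrite -(ys_nth (ltn_ord k')).
rewrite (yh_sum (fun v => v == yh`_k)).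
rewrite (eq_bigr (fun _ => yh`_k * 1)); last by move=> k' /eqP ->; rewrite mulr1.
rewrite -mulr_sumr mulfK //.
rewrite psumr_neq0; last by move=> i _; exact: ler01.
apply/hasP; exists (Ordinal hk); first exact: mem_index_enum.
by rewrite eqxx ltr01.
Qed.

Lemma obj_pava : objective p y PB = (\sum_(k < N) (ys`_k - yh`_k)^+2) / N%:R.
Proof.
rewrite objE; last exact: PB_binning.
congr (_ / _).
rewrite reindex; apply: eq_bigr => k _.
have [hb hin] := bf_prop (nth x0 s k) PB_binning.
by rewrite ys_nth // (Phat_bin hb (ltn_ord k) hin).
Qed.

Lemma PB_feasible : feasible p y PB.
Proof.
split; first exact: PB_binning.
move=> b b' hbb' hb' h1 h2.
have hb := ltn_trans hbb' hb'.
case/card_gt0P: h1 => i; rewrite inE => hi.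
case/card_gt0P: h2 => j; rewrite inE => hj.
have [k hk ek] := pos_of i; have [l hl el] := pos_of j.
rewrite ek in hi; rewrite el in hj.
rewrite (Phat_bin hb hk hi) (Phat_bin hb' hl hj).
have [_ _ hord] := PB_binning.
have hlt := hord b b' _ _ hbb' hb' hi hj.
apply: yh_le => //.
rewrite leqNgt; apply/negP => hlk.
by have := ps_lt hlk hk; rewrite ltNge (ltW hlt).
Qed.

Lemma gmono bins i j : feasible p y bins -> p i < p j ->
  Phat p y (nth (itv01 R) bins (bf bins i)) <= Phat p y (nth (itv01 R) bins (bf bins j)).
Proof.
move=> [hb hmono] hij.
have [hbi hini] := bf_prop i hb; have [hbj hinj2] := bf_prop j hb.
have [_ _ hord] := hb.
case: (ltngtP (bf bins i) (bf bins j)) => h.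
- by apply: hmono => //; apply/card_gt0P; [exists i | exists j]; rewrite inE.
- by have := hord _ _ _ _ h hbi hinj2 hini; rewrite ltNge (ltW hij).
- by rewrite h.
Qed.

Lemma lower bins : feasible p y bins ->
  (\sum_(k < N) (ys`_k - yh`_k)^+2) / N%:R <= objective p y bins.
Proof.
move=> hf; have hb := hf.1.
rewrite objE //.
apply: ler_wpM2r; first by rewrite invr_ge0 ler0n.
rewrite [X in _ <= X]reindex.
under [X in _ <= X]eq_bigr => k _ do rewrite -(ys_nth (ltn_ord k)).
apply: (yh_opt (f := fun k => Phat p y (nth (itv01 R) bins (bf bins (nth x0 s k))))).
move=> k l hkl hl.
case: (ltngtP k l) => h.
- exact: gmono hf (ps_lt h hl).
- by move: hkl; rewrite leqNgt h.
- by rewrite h.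
Qed.

End Main.

Unset Implicit Arguments.
Set Strict Implicit.

Theorem mainTheorem1 (R : realFieldType) (N : nat) (p : 'I_N -> R) (y : 'I_N -> bool)
  (hp : forall i, 0 <= p i <= 1)
  (hinj : injective p)
  (hnontriv : ~ is_optimal p y [:: itv01 R]) :
  is_optimal p y (pava_bins p y).
Proof.
move: p y hp hinj hnontriv; case: N => [|n] p' y' hp' hinj' _.
  have h0 : forall bins, objective p' y' bins = 0.
    by move=> bins; rewrite /objective big1 // => I _; rewrite mulr0n invr0 mulr0 mul0r.
  split; last by move=> bins _; rewrite !h0.
  split; first exact: (@mk_binning R [::]).
  have hs : size (pava_bins p' y') = 1%N by [].
  by move=> b b' hbb' hb'; move: hb'; rewrite hs; lia.
have x0 : 'I_n.+1 := ord0.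
split; first exact: (PB_feasible y' x0 hp' hinj').
move=> bins hf.
have E := obj_pava y' x0 hp' hinj'.
have L := lower x0 hp' hinj' hf.
have E' : objective p' y' (pava_bins p' y') = _ := E.
by rewrite E'.
Qed.
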